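(* Every ideal $J$ of $\widetilde{\mathbb{R}}_{sm}$ is convex: if $x\in J$ and $y\in\widetilde{\mathbb{R}}_{sm}$ with $0\le y\le x$, then $y\in J$.
   Context: Let $I=(0,1]$. $\widetilde{\mathbb{R}}_{sm}=\mathcal{E}_{M,sm}/\mathcal{N}_{sm}$ where $\mathcal{E}_{M,sm}$ is the set of smooth nets $(r_\varepsilon)_{\varepsilon\in I}\in\mathbb{R}^I$ with $|r_\varepsilon|=O(\varepsilon^{-N})$ for some $N$, and $\mathcal{N}_{sm}$ those with $|r_\varepsilon|=O(\varepsilon^m)$ for all $m$. For $r,s\in\widetilde{\mathbb{R}}_{sm}$, $r\le s$ means there are representatives with $r_\varepsilon\le s_\varepsilon$ for all $\varepsilon\in I$. *)

(* Defs.v *)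
From Stdlib Require Import Reals.
From Coquelicot Require Import Coquelicot.
Open Scope R_scope.

(* Nets (r_eps)_{eps in I}, I = (0,1], are represented by functions R -> R;
   only the values on I matter (all notions below only look at I). *)
Definition inI (e : R) : Prop := 0 < e <= 1.

Definition smooth_net (r : R -> R) : Prop :=
  exists g : R -> R, (forall e, inI e -> g e = r e) /\
    exists d, 0 < d /\ forall (n : nat) (x : R), 0 < x < 1 + d -> ex_derive_n g n x.

Definition moderate (r : R -> R) : Prop :=
  exists N : nat, exists C : R, exists e0 : R, 0 < e0 <= 1 /\
    forall e, 0 < e <= e0 -> Rabs (r e) <= C * (/ e) ^ N.

Definition negligible (r : R -> R) : Prop :=
  forall m : nat, exists C : R, exists e0 : R, 0 < e0 <= 1 /\
    forall e, 0 < e <= e0 -> Rabs (r e) <= C * e ^ m.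

Definition EMsm (r : R -> R) : Prop := smooth_net r /\ moderate r.

Definition Nsm (r : R -> R) : Prop := smooth_net r /\ negligible r.
Definition sm_eq (r s : R -> R) : Prop := Nsm (fun e => r e - s e).

Definition sm_le (r s : R -> R) : Prop :=
  exists r' s' : R -> R, EMsm r' /\ EMsm s' /\ sm_eq r r' /\ sm_eq s s' /\
    forall e, inI e -> r' e <= s' e.

(* A subset of the quotient R~_sm is encoded by the (saturated) set of its
   representatives.  An ideal: contains 0, closed under +, and under
   multiplication by arbitrary elements of R~_sm. *)
Definition sm_ideal (J : (R -> R) -> Prop) : Prop :=
  (forall x, J x -> EMsm x) /\
  (forall x x', J x -> EMsm x' -> sm_eq x x' -> J x') /\
  J (fun _ => 0) /\
  (forall x y, J x -> J y -> J (fun e => x e + y e)) /\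
  (forall a x, EMsm a -> J x -> J (fun e => a e * x e)).

(* Main.v *)
Require Import Defs.
From Stdlib Require Import Reals Lra Lia Psatz.
From Coquelicot Require Import Coquelicot.
Open Scope R_scope.

Definition Pn (b : R) (f : R -> R) (n : nat) : Prop :=
  forall k x, (k <= n)%nat -> 0 < x < b -> ex_derive_n f k x.

Lemma loc_U b x : 0 < x < b -> locally x (fun t => 0 < t < b).
Proof.
  intros Hx.
  assert (He : 0 < Rmin x (b - x)) by (apply Rmin_glb_lt; lra).
  exists (mkposreal _ He). intros y Hy.
  change (Rabs (y - x) < Rmin x (b - x)) in Hy.
  pose proof (Rmin_l x (b-x)). pose proof (Rmin_r x (b-x)).
  apply Rabs_def2 in Hy. lra.
Qed.

Lemma Pn_ext b f g n : (forall x, 0 < x < b -> f x = g x) -> Pn b f n -> Pn b g n.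
Proof.
  intros E H k x Hk Hx. apply (ex_derive_n_ext_loc f g).
  - generalize (loc_U b x Hx). apply filter_imp. intros t Ht; now apply E.
  - now apply H.
Qed.

Lemma Pn_le b f n m : (m <= n)%nat -> Pn b f n -> Pn b f m.
Proof. intros Hm H k x Hk Hx. apply H; auto; lia. Qed.

Lemma Pn_0 b f : Pn b f 0.
Proof. intros k x Hk Hx. replace k with 0%nat by lia. exact I. Qed.

Lemma Pn_S b f n : (forall x, 0 < x < b -> ex_derive f x) -> Pn b (Derive f) n -> Pn b f (S n).
Proof.
  intros H1 H k x Hk Hx. destruct k as [|k]; [exact I|].
  destruct k as [|k]; [simpl; now apply H1|].
  simpl. apply (ex_derive_ext (Derive_n (Derive f) k)).
  - intros t. transitivity (Derive_n (Derive_n f 1) k t). reflexivity.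
    rewrite Derive_n_comp. now replace (k+1)%nat with (S k) by lia.
  - apply (H (S k) x). lia. exact Hx.
Qed.

Lemma Pn_S_inv b f n : Pn b f (S n) -> (forall x, 0 < x < b -> ex_derive f x) /\ Pn b (Derive f) n.
Proof.
  intros H. split.
  - intros x Hx. apply (H 1%nat x). lia. exact Hx.
  - intros k x Hk Hx. destruct k as [|k]; [exact I|].
    simpl. apply (ex_derive_ext (Derive_n f (S k))).
    + intros t. transitivity (Derive_n (Derive_n f 1) k t).
      rewrite Derive_n_comp. now replace (k+1)%nat with (S k) by lia. reflexivity.
    + apply (H (S (S k)) x). lia. exact Hx.
Qed.

Lemma Pn_const b c n : Pn b (fun _ => c) n.
Proof.
  revert c; induction n; intros c. apply Pn_0.
  apply Pn_S. intros; apply ex_derive_const.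
  apply (Pn_ext b (fun _ => 0)). intros; now rewrite Derive_const. apply IHn.
Qed.

Lemma Pn_id b n : Pn b (fun t => t) n.
Proof.
  destruct n. apply Pn_0. apply Pn_S. intros; apply ex_derive_id.
  apply (Pn_ext b (fun _ => 1)). intros; symmetry; apply (Derive_id x). apply Pn_const.
Qed.

Lemma Pn_plus b n : forall f g, Pn b f n -> Pn b g n -> Pn b (fun t => f t + g t) n.
Proof.
  induction n; intros f g Hf Hg. apply Pn_0.
  apply Pn_S_inv in Hf as [Hf1 Hf2]. apply Pn_S_inv in Hg as [Hg1 Hg2].
  apply Pn_S. intros x Hx. apply (ex_derive_plus f g); auto.
  apply (Pn_ext b (fun t => Derive f t + Derive g t)).
  intros x Hx. rewrite Derive_plus; auto.
  apply IHn; auto.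
Qed.

Lemma Pn_mult b n : forall f g, Pn b f n -> Pn b g n -> Pn b (fun t => f t * g t) n.
Proof.
  induction n; intros f g Hf Hg. apply Pn_0.
  pose proof Hf as Hf'. pose proof Hg as Hg'.
  apply Pn_S_inv in Hf as [Hf1 Hf2]. apply Pn_S_inv in Hg as [Hg1 Hg2].
  apply Pn_S. intros x Hx. apply (ex_derive_mult f g); auto.
  apply (Pn_ext b (fun t => Derive f t * g t + f t * Derive g t)).
  intros x Hx. rewrite Derive_mult; auto.
  assert (Pn b f n) by (apply (Pn_le b f (S n)); auto).
  assert (Pn b g n) by (apply (Pn_le b g (S n)); auto).
  apply Pn_plus; apply IHn; auto.
Qed.

Lemma Pn_inv b n : forall f, (forall x, 0 < x < b -> f x <> 0) -> Pn b f n -> Pn b (fun t => / f t) n.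
Proof.
  induction n; intros f Hnz Hf. apply Pn_0.
  pose proof Hf as Hf'.
  apply Pn_S_inv in Hf as [Hf1 Hf2].
  assert (Hi : Pn b (fun t => / f t) n) by (apply IHn; auto; apply (Pn_le b f (S n)); auto).
  apply Pn_S. intros x Hx. apply ex_derive_inv; auto.
  apply (Pn_ext b (fun t => (-1) * Derive f t * (/ f t * / f t))).
  intros x Hx. rewrite Derive_inv; auto. specialize (Hnz x Hx). field. auto.
  apply Pn_mult; [apply Pn_mult; [apply Pn_const|auto]|apply Pn_mult; auto].
Qed.

Lemma Pn_expinv b n : Pn b (fun t => exp (- / t)) n.
Proof.
  induction n. apply Pn_0.
  assert (Hd : forall x, 0 < x < b -> ex_derive (fun t => exp (- / t)) x /\
     Derive (fun t => exp (- / t)) x = exp (- / x) * (/ x * / x)).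
  { intros x Hx. assert (x <> 0) by lra.
    assert (D : is_derive (fun t => exp (- / t)) x (exp (- / x) * (/ x * / x))).
    { auto_derive. auto. field. auto. }
    split. eexists; eauto. apply is_derive_unique; auto. }
  apply Pn_S. intros; apply Hd; auto.
  apply (Pn_ext b (fun t => exp (- / t) * (/ t * / t))).
  intros; symmetry; apply Hd; auto.
  apply Pn_mult. auto. apply Pn_mult; apply Pn_inv; try (intros; lra); apply Pn_id.
Qed.
Lemma sum_ge_last (f : nat -> R) n : (forall k, 0 <= f k) -> f n <= sum_f_R0 f n.
Proof.
  intros H. destruct n. simpl; lra. rewrite tech5.
  assert (0 <= sum_f_R0 f n).
  { clear -H. induction n; simpl. apply H. pose proof (H (S n)). lra. }
  lra.
Qed.

Lemma exp_bound k e : 0 < e -> exp (- / e) <= INR (Factorial.fact k) * e ^ k.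
Proof.
  intros He.
  assert (Hx : 0 <= / e) by (left; apply Rinv_0_lt_compat; auto).
  assert (H1 : (/ e) ^ k / INR (Factorial.fact k) <= exp (/ e)).
  { eapply Rle_trans; [|apply (exp_ge_taylor _ k Hx)].
    apply (sum_ge_last (fun j => (/ e) ^ j / INR (Factorial.fact j)) k).
    intros j. apply Rmult_le_pos. apply pow_le; auto.
    left; apply Rinv_0_lt_compat, INR_fact_lt_0. }
  pose proof (INR_fact_lt_0 k) as Hf.
  assert (Hek : 0 < e ^ k) by (apply pow_lt; auto).
  rewrite exp_Ropp. rewrite pow_inv in H1.
  assert (Hp : 0 < / e ^ k / INR (Factorial.fact k)).
  { apply Rdiv_lt_0_compat; auto. apply Rinv_0_lt_compat; auto. }
  apply Rle_trans with (/ (/ e ^ k / INR (Factorial.fact k))).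
  apply Rinv_le_contravar; auto.
  right. field. split; lra.
Qed.

Lemma key_a (y X M r : R) : 0 < r -> 0 <= M -> Rabs y <= Rabs X + M -> M * M <= 3 * r ->
  Rabs (y * X * / (X * X + r)) <= 2.
Proof.
  intros Hr HM Hy HMr.
  assert (HD : 0 < X * X + r) by nra.
  assert (HI : 0 < / (X*X+r)) by (apply Rinv_0_lt_compat; lra).
  rewrite Rabs_mult, (Rabs_pos_eq (/ (X*X+r))) by lra.
  rewrite Rabs_mult.
  apply (Rmult_le_reg_r (X*X+r)); auto.
  rewrite Rmult_assoc, Rinv_l by lra. rewrite Rmult_1_r.
  assert (Rabs X * Rabs X = X * X) by (rewrite <- Rabs_mult; apply Rabs_pos_eq; nra).
  pose proof (Rabs_pos X). pose proof (Rabs_pos y).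
  assert (Rabs y * Rabs X <= Rabs X * Rabs X + M * Rabs X) by nra.
  assert (2 * (M * Rabs X) <= M * M + Rabs X * Rabs X) by (pose proof (pow2_ge_0 (M - Rabs X)); simpl in *; lra).
  nra.
Qed.

Lemma key_d (y X M r R1 d : R) : 0 < r -> 0 <= M -> 0 < d -> Rabs y <= Rabs X + M -> r <= R1 ->
  Rabs (y * X * / (X * X + r) * X - y) <= (R1 + d * d) / (2 * d) + M.
Proof.
  intros Hr HM Hd Hy HR.
  assert (HD : 0 < X * X + r) by nra.
  replace (y * X * / (X * X + r) * X - y) with (- (y * r / (X * X + r))) by (field; lra).
  assert (HI : 0 < / (X*X+r)) by (apply Rinv_0_lt_compat; lra).
  rewrite Rabs_Ropp. unfold Rdiv. rewrite !Rabs_mult, (Rabs_pos_eq (/ (X*X+r))) by lra.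
  rewrite (Rabs_pos_eq r) by lra.
  pose proof (Rabs_pos X). pose proof (Rabs_pos y).
  assert (Rabs X * Rabs X = X * X) by (rewrite <- Rabs_mult; apply Rabs_pos_eq; nra).
  assert (Hb1 : Rabs y * r * / (X * X + r) <= Rabs X * r * / (X*X+r) + M).
  { apply (Rmult_le_reg_r (X*X+r)); auto.
    rewrite Rmult_plus_distr_r, !(Rmult_assoc _ (/ _)), !Rinv_l by lra. nra. }
  assert (Hb2 : Rabs X * r * / (X*X+r) <= (R1 + d * d) * / (2 * d)).
  { apply (Rmult_le_reg_r (X*X+r)); auto.
    rewrite !(Rmult_assoc _ (/ _)), !Rinv_l by lra.
    apply (Rmult_le_reg_r (2*d)); [lra|].
    replace ((R1 + d * d) * (/ (2 * d) * (X * X + r)) * (2 * d)) with ((R1 + d*d) * (X*X+r)) by (field; lra).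
    assert (2 * d * Rabs X <= X * X + d * d) by (pose proof (pow2_ge_0 (d - Rabs X)); simpl in *; lra).
    nra. }
  lra.
Qed.

Lemma pow_le1_mono (e : R) (m n : nat) : 0 <= e <= 1 -> (m <= n)%nat -> e ^ n <= e ^ m.
Proof.
  intros He Hmn. replace n with (m + (n - m))%nat by lia. rewrite pow_add.
  assert (e ^ (n - m) <= 1).
  { rewrite <- (pow1 (n - m)). apply pow_incr. lra. }
  pose proof (pow_le e m (proj1 He)). nra.
Qed.

Lemma neg_get f : negligible f -> forall m, exists C e0, 0 < e0 <= 1 /\ 0 <= C /\
  forall e, 0 < e <= e0 -> Rabs (f e) <= C * e ^ m.
Proof.
  intros H m. destruct (H m) as (C & e0 & He0 & HC).
  exists (Rmax C 0), e0. split; auto. split. apply Rmax_r.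
  intros e He. eapply Rle_trans. apply HC; auto.
  apply Rmult_le_compat_r. apply pow_le; lra. apply Rmax_l.
Qed.

Definition rho (u v w : R -> R) (e : R) : R :=
  (u e * u e + v e * v e + w e * w e) * (/ e * / e) + exp (- / e).
Definition aa (y X u v w : R -> R) (e : R) : R :=
  y e * X e * / (X e * X e + rho u v w e).

Lemma rho_pos u v w e : 0 < e -> 0 < rho u v w e.
Proof.
  intros He. unfold rho. pose proof (exp_pos (- / e)).
  assert (0 < / e) by (apply Rinv_0_lt_compat; auto).
  assert (0 <= u e * u e + v e * v e + w e * w e) by nra. nra.
Qed.

Lemma M_sq (u v w : R -> R) e : 0 < e <= 1 ->
  (Rabs (u e) + Rabs (v e) + Rabs (w e)) * (Rabs (u e) + Rabs (v e) + Rabs (w e)) <= 3 * rho u v w e.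
Proof.
  intros He. unfold rho. pose proof (exp_pos (- / e)).
  assert (Hi : 1 <= / e * / e).
  { assert (1 <= / e). { rewrite <- Rinv_1. apply Rinv_le_contravar; lra. } nra. }
  assert (Rabs (u e) * Rabs (u e) = u e * u e) by (rewrite <- Rabs_mult; apply Rabs_pos_eq; nra).
  assert (Rabs (v e) * Rabs (v e) = v e * v e) by (rewrite <- Rabs_mult; apply Rabs_pos_eq; nra).
  assert (Rabs (w e) * Rabs (w e) = w e * w e) by (rewrite <- Rabs_mult; apply Rabs_pos_eq; nra).
  set (p := Rabs (u e)) in *. set (q := Rabs (v e)) in *. set (s := Rabs (w e)) in *.
  assert (Hs : (p + q + s) * (p + q + s) <= 3 * (p*p + q*q + s*s)).
  { pose proof (pow2_ge_0 (p - q)). pose proof (pow2_ge_0 (q - s)). pose proof (pow2_ge_0 (p - s)).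
    simpl in *. lra. }
  assert (0 <= p*p+q*q+s*s) by nra.
  rewrite H0, H1, H2 in *. nra.
Qed.

Lemma core (y X u v w : R -> R) :
  (forall e, inI e -> Rabs (y e) <= Rabs (X e) + (Rabs (u e) + Rabs (v e) + Rabs (w e))) ->
  negligible u -> negligible v -> negligible w ->
  (forall e, inI e -> Rabs (aa y X u v w e) <= 2) /\
  negligible (fun e => aa y X u v w e * X e - y e).
Proof.
  intros Hy Hu Hv Hw. split.
  - intros e He. unfold aa. apply (key_a _ _ (Rabs (u e) + Rabs (v e) + Rabs (w e))).
    apply rho_pos; destruct He; lra.
    pose proof (Rabs_pos (u e)); pose proof (Rabs_pos (v e)); pose proof (Rabs_pos (w e)); lra.
    apply Hy; auto. apply M_sq; auto.
  - intros m.
    destruct (neg_get u Hu (2*m+1)) as (Cu & eu & Heu & HCu & Bu).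
    destruct (neg_get v Hv (2*m+1)) as (Cv & ev & Hev & HCv & Bv).
    destruct (neg_get w Hw (2*m+1)) as (Cw & ew & Hew & HCw & Bw).
    set (K := Cu*Cu + Cv*Cv + Cw*Cw + INR (Factorial.fact (2*m))).
    exists ((K + 1) / 2 + (Cu + Cv + Cw)), (Rmin eu (Rmin ev ew)).
    assert (Hm1 : 0 < Rmin eu (Rmin ev ew) <= 1).
    { split. apply Rmin_glb_lt; [lra|apply Rmin_glb_lt; lra].
      eapply Rle_trans; [apply Rmin_l|lra]. }
    split; auto. intros e He.
    assert (He1 : e <= eu /\ e <= ev /\ e <= ew).
    { pose proof (Rmin_l eu (Rmin ev ew)); pose proof (Rmin_r eu (Rmin ev ew));
      pose proof (Rmin_l ev ew); pose proof (Rmin_r ev ew). lra. }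
    assert (HI : inI e) by (unfold inI; lra).
    set (d := e ^ m).
    assert (Hd : 0 < d) by (apply pow_lt; lra).
    assert (Hd1 : d <= 1) by (rewrite <- (pow1 m); apply pow_incr; lra).
    assert (E2 : e ^ (2*m+1) = d * d * e).
    { rewrite pow_add. unfold d. replace (2*m)%nat with (m*2)%nat by lia.
      rewrite pow_mult. simpl. ring. }
    assert (Hu' := Bu e ltac:(lra)). assert (Hv' := Bv e ltac:(lra)). assert (Hw' := Bw e ltac:(lra)).
    rewrite E2 in Hu', Hv', Hw'.
    assert (Hie : 0 < / e) by (apply Rinv_0_lt_compat; lra).
    assert (Sq : forall z C, 0 <= C -> Rabs z <= C * (d * d * e) -> z * z * (/ e * / e) <= C * C * (d * d)).
    { intros z C HC Hz.
      assert (Hz' : Rabs (z * / e) <= C * (d * d)).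
      { rewrite Rabs_mult, (Rabs_pos_eq (/ e)) by lra.
        apply (Rmult_le_reg_r e); [lra|]. rewrite Rmult_assoc, Rinv_l by lra. lra. }
      replace (z * z * (/ e * / e)) with (Rabs (z * / e) * Rabs (z * / e))
        by (rewrite <- Rabs_mult; rewrite Rabs_pos_eq; [ring| nra]).
      pose proof (Rabs_pos (z * / e)). assert (0 <= d * d) by nra.
      assert (d * d <= 1) by nra.
      apply Rle_trans with ((C * (d*d)) * (C * (d*d))). apply Rmult_le_compat; auto.
      assert (0 <= C * C) by nra. nra. }
    assert (Hex : exp (- / e) <= INR (Factorial.fact (2*m)) * (d * d)).
    { replace (d * d) with (e ^ (2*m)). apply exp_bound; lra.
      unfold d. replace (2*m)%nat with (m*2)%nat by lia. rewrite pow_mult. simpl; ring. }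
    assert (Hr : rho u v w e <= K * (d * d)).
    { unfold rho, K.
      pose proof (Sq (u e) Cu HCu Hu'). pose proof (Sq (v e) Cv HCv Hv'). pose proof (Sq (w e) Cw HCw Hw').
      nra. }
    assert (HM : Rabs (u e) + Rabs (v e) + Rabs (w e) <= (Cu + Cv + Cw) * d).
    { assert (d * d * e <= d) by (assert (0 <= d*e <= 1) by (split; nra); nra).
      nra. }
    eapply Rle_trans. unfold aa.
    apply (key_d _ _ (Rabs (u e) + Rabs (v e) + Rabs (w e)) _ (K * (d * d)) d).
    apply rho_pos; lra.
    pose proof (Rabs_pos (u e)); pose proof (Rabs_pos (v e)); pose proof (Rabs_pos (w e)); lra.
    exact Hd. apply Hy; auto. exact Hr.
    replace ((K * (d * d) + d * d) / (2 * d)) with ((K + 1) / 2 * d) by (field; lra).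
    fold d. nra.
Qed.

Lemma Pn_shrink b b' g n : b' <= b -> Pn b g n -> Pn b' g n.
Proof. intros Hb H k x Hk Hx. apply H; auto; lra. Qed.

Lemma smooth_ext r : smooth_net r -> exists g b, 1 < b /\ (forall e, inI e -> g e = r e) /\ forall n, Pn b g n.
Proof.
  intros (g & Hg & d & Hd & Hs). exists g, (1 + d). split. lra. split; auto.
  intros n k x _ Hx. apply Hs; lra.
Qed.

Lemma smooth_of g r b : 1 < b -> (forall e, inI e -> g e = r e) -> (forall n, Pn b g n) -> smooth_net r.
Proof.
  intros Hb Hg Hs. exists g. split; auto. exists (b - 1). split. lra.
  intros n x Hx. apply (Hs n n x). lia. lra.
Qed.

Ltac pn1 := match goal with
| |- Pn _ (fun t => exp (- / t)) _ => apply Pn_expinv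
| |- Pn _ (fun t => t) _ => apply Pn_id
| |- Pn _ (fun t => / t) _ => apply Pn_inv; [intros; lra | apply Pn_id]
| |- Pn _ (fun t => @?A t + @?B t) _ => apply (Pn_plus _ _ A B)
| |- Pn _ (fun t => @?A t * @?B t) _ => apply (Pn_mult _ _ A B)
| |- Pn _ (fun _ => ?c) _ => apply Pn_const
| H : forall n, Pn ?b ?g n |- Pn ?b ?g _ => apply H
| H : forall n, Pn ?b ?g n |- Pn ?b (fun t => ?g t) _ => apply H
end.
Ltac pn := repeat pn1.

Lemma smooth_aa y X u v w : smooth_net y -> smooth_net X -> smooth_net u -> smooth_net v -> smooth_net w ->
  smooth_net (aa y X u v w) /\ smooth_net (fun e => aa y X u v w e * X e - y e).
Proof.
  intros Sy SX Su Sv Sw.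
  destruct (smooth_ext _ Sy) as (gy & by_ & Hby & Ay & Py).
  destruct (smooth_ext _ SX) as (gX & bX & HbX & AX & PX).
  destruct (smooth_ext _ Su) as (gu & bu & Hbu & Au & Pu).
  destruct (smooth_ext _ Sv) as (gv & bv & Hbv & Av & Pv).
  destruct (smooth_ext _ Sw) as (gw & bw & Hbw & Aw & Pw).
  set (b := Rmin by_ (Rmin bX (Rmin bu (Rmin bv bw)))).
  assert (Hb : 1 < b).
  { unfold b. repeat apply Rmin_glb_lt; auto. }
  assert (L1 : b <= by_ /\ b <= bX /\ b <= bu /\ b <= bv /\ b <= bw).
  { unfold b. pose proof (Rmin_l by_ (Rmin bX (Rmin bu (Rmin bv bw)))).
    pose proof (Rmin_r by_ (Rmin bX (Rmin bu (Rmin bv bw)))).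
    pose proof (Rmin_l bX (Rmin bu (Rmin bv bw))). pose proof (Rmin_r bX (Rmin bu (Rmin bv bw))).
    pose proof (Rmin_l bu (Rmin bv bw)). pose proof (Rmin_r bu (Rmin bv bw)).
    pose proof (Rmin_l bv bw). pose proof (Rmin_r bv bw). lra. }
  assert (Py' : forall n, Pn b gy n) by (intros; eapply Pn_shrink; [|apply Py]; lra).
  assert (PX' : forall n, Pn b gX n) by (intros; eapply Pn_shrink; [|apply PX]; lra).
  assert (Pu' : forall n, Pn b gu n) by (intros; eapply Pn_shrink; [|apply Pu]; lra).
  assert (Pv' : forall n, Pn b gv n) by (intros; eapply Pn_shrink; [|apply Pv]; lra).
  assert (Pw' : forall n, Pn b gw n) by (intros; eapply Pn_shrink; [|apply Pw]; lra).
  set (ga := aa gy gX gu gv gw).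
  assert (Aa : forall e, inI e -> ga e = aa y X u v w e).
  { intros e He. unfold ga, aa, rho. rewrite Ay, AX, Au, Av, Aw; auto. }
  assert (Pa : forall n, Pn b ga n).
  { intros n. unfold ga, aa, rho. apply Pn_mult. pn.
    apply Pn_inv.
    - intros x Hx. pose proof (rho_pos gu gv gw x (proj1 Hx)). unfold rho in H.
      assert (0 <= gX x * gX x) by nra. lra.
    - pn. }
  split.
  - apply (smooth_of ga _ b); auto.
  - apply (smooth_of (fun e => ga e * gX e + (-1) * gy e) _ b); auto.
    + intros e He. rewrite Aa, AX, Ay; auto. ring.
    + intros n. apply Pn_plus. apply Pn_mult; auto. apply Pn_mult; auto. apply Pn_const.
Qed.

Theorem proposition4p23 (J : (R -> R) -> Prop) (HJ : sm_ideal J)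
  (x y : R -> R) (Hx : J x) (Hy : EMsm y)
  (H0y : sm_le (fun _ => 0) y) (Hyx : sm_le y x) : J y.
Proof.
  destruct HJ as (HJE & HJsat & _ & _ & HJmul).
  destruct H0y as (r0 & y1 & Er0 & Ey1 & Hr0 & Hy1 & Hle1).
  destruct Hyx as (y2 & x2 & Ey2 & Ex2 & Hy2 & Hx2 & Hle2).
  assert (JX : J x2) by (apply (HJsat x x2); auto).
  pose (u := fun e => 0 - r0 e). pose (v := fun e => y e - y1 e). pose (w := fun e => y e - y2 e).
  assert (Nu : Nsm u) by exact Hr0. assert (Nv : Nsm v) by exact Hy1. assert (Nw : Nsm w) by exact Hy2.
  destruct Nu as [Su Gu]. destruct Nv as [Sv Gv]. destruct Nw as [Sw Gw].
  assert (Bd : forall e, inI e -> Rabs (y e) <= Rabs (x2 e) + (Rabs (u e) + Rabs (v e) + Rabs (w e))).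
  { intros e He. specialize (Hle1 e He). specialize (Hle2 e He).
    unfold u, v, w.
    pose proof (Rle_abs (0 - r0 e)). pose proof (Rle_abs (y e - y1 e)). pose proof (Rle_abs (y e - y2 e)).
    pose proof (Rle_abs (- (0 - r0 e))). pose proof (Rle_abs (- (y e - y1 e))). pose proof (Rle_abs (- (y e - y2 e))).
    pose proof (Rle_abs (x2 e)). pose proof (Rle_abs (- x2 e)).
    rewrite Rabs_Ropp in *. apply Rabs_le. lra. }
  destruct (core y x2 u v w Bd Gu Gv Gw) as [Ha Hn].
  destruct (smooth_aa y x2 u v w (proj1 Hy) (proj1 Ex2) Su Sv Sw) as [Sa Sd].
  apply (HJsat (fun e => aa y x2 u v w e * x2 e) y).
  - apply HJmul; auto. split; auto.
    exists 0%nat, 2, 1. split. lra. intros e He. simpl. rewrite Rmult_1_r. apply Ha. unfold inI; lra.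
  - exact Hy.
  - unfold sm_eq. split; auto.
Qed.
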